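(* Let $H\in\mathbb{H}^{n\times n}$ be an invertible Hermitian quaternion matrix and let $X\in\mathbb{H}^{n\times n}$. Then $X$ admits an $H$-polar decomposition $X=UA$, with $U$ $H$-unitary and $A$ $H$-selfadjoint, if and only if there exists an $H$-selfadjoint matrix $A\in\mathbb{H}^{n\times n}$ with $A^2=X^{[*]}X$ and $\mathrm{Ker}\,X=\mathrm{Ker}\,A$.
   Context: $\mathbb{H}$ denotes the real quaternions, $\mathbb{H}^n$ is a right vector space, and $A^*$ is the conjugate transpose. The indefinite inner product is $[x,y]=y^*Hx$. The $H$-adjoint of $X$ is $X^{[*]}=H^{-1}X^*H$. A matrix $A$ is $H$-selfadjoint if $A^{[*]}=A$; a matrix $U$ is $H$-unitary if $U^*HU=H$. An $H$-polar decomposition of $X$ is a factorization $X=UA$ with $U$ $H$-unitary and $A$ $H$-selfadjoint. *)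

(* Defs.v *)
From HB Require Import structures.
From mathcomp Require Import all_boot all_order all_algebra.
From mathcomp Require Import reals.
From Stdlib Require Import ClassicalEpsilon.
From mathcomp Require Import ring.
Set Implicit Arguments. Unset Strict Implicit. Unset Printing Implicit Defensive.
Import Order.TTheory GRing.Theory Num.Theory.
Local Open Scope ring_scope.

Section Quaternions.
Variable R : realType.

Record quat := Quat { qre : R; qi : R; qj : R; qk : R }.

Definition quat_code (q : quat) : R * R * R * R := (qre q, qi q, qj q, qk q).
Definition quat_decode (c : R * R * R * R) : quat :=
  let: (a, b, c, d) := c in Quat a b c d.
Lemma quat_codeK : cancel quat_code quat_decode. Proof. by case. Qed.

HB.instance Definition _ := Choice.copy quat (can_type quat_codeK).

Definition qzero := Quat 0 0 0 0.
Definition qone := Quat 1 0 0 0.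
Definition qadd (p q : quat) :=
  Quat (qre p + qre q) (qi p + qi q) (qj p + qj q) (qk p + qk q).
Definition qopp (p : quat) := Quat (- qre p) (- qi p) (- qj p) (- qk p).
(* Hamilton product: i^2 = j^2 = k^2 = ijk = -1 *)
Definition qmul (p q : quat) :=
  Quat (qre p * qre q - qi p * qi q - qj p * qj q - qk p * qk q)
       (qre p * qi q + qi p * qre q + qj p * qk q - qk p * qj q)
       (qre p * qj q - qi p * qk q + qj p * qre q + qk p * qi q)
       (qre p * qk q + qi p * qj q - qj p * qi q + qk p * qre q).
Definition qconj (p : quat) := Quat (qre p) (- qi p) (- qj p) (- qk p).

Lemma qaddA : associative qadd.
Proof. by case=> ????[????][????]; rewrite /qadd /= !addrA. Qed.
Lemma qaddC : commutative qadd.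
Proof. by case=> ????[????]; rewrite /qadd /=; congr Quat; apply: addrC. Qed.
Lemma qadd0 : left_id qzero qadd.
Proof. by case=> ????; rewrite /qadd /= !add0r. Qed.
Lemma qaddN : left_inverse qzero qopp qadd.
Proof. by case=> ????; rewrite /qadd /= !addNr. Qed.

HB.instance Definition _ := GRing.isZmodule.Build quat qaddA qaddC qadd0 qaddN.

Lemma qmulA : associative qmul.
Proof. by case=> ????[????][????]; rewrite /qmul /=; congr Quat; ring. Qed.
Lemma qmul1 : left_id qone qmul.
Proof. by case=> ????; rewrite /qmul /=; congr Quat; ring. Qed.
Lemma qmulr1 : right_id qone qmul.
Proof. by case=> ????; rewrite /qmul /=; congr Quat; ring. Qed.
Lemma qmulDl : left_distributive qmul +%R.
Proof.
move=> p q r; change (qmul (qadd p q) r = qadd (qmul p r) (qmul q r)).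
by case: p q r => ????[????][????]; rewrite /qmul /qadd /=; congr Quat; ring.
Qed.
Lemma qmulDr : right_distributive qmul +%R.
Proof.
move=> p q r; change (qmul p (qadd q r) = qadd (qmul p q) (qmul p r)).
by case: p q r => ????[????][????]; rewrite /qmul /qadd /=; congr Quat; ring.
Qed.
Lemma qone_neq0 : qone != 0.
Proof. apply/eqP=> /(congr1 qre) /= /eqP; by rewrite oner_eq0. Qed.

HB.instance Definition _ :=
  GRing.Zmodule_isNzRing.Build quat qmulA qmul1 qmulr1 qmulDl qmulDr qone_neq0.

End Quaternions.

Section QuatMatrices.
Variable R : realType.
Local Notation H := (quat R).

Definition qadjmx m n (A : 'M[H]_(m, n)) : 'M[H]_(n, m) :=
  \matrix_(i, j) qconj (A j i).

Definition qinvertible n (A : 'M[H]_n) : Prop :=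
  exists B : 'M[H]_n, A *m B = 1%:M /\ B *m A = 1%:M.

(* the inverse of an invertible matrix (arbitrary otherwise) *)
Definition qinvmx n (A : 'M[H]_n) : 'M[H]_n :=
  epsilon (inhabits 0) (fun B => A *m B = 1%:M /\ B *m A = 1%:M).

Definition qhermitian n (A : 'M[H]_n) : Prop := qadjmx A = A.

Definition Hadj n (Hm X : 'M[H]_n) : 'M[H]_n := qinvmx Hm *m qadjmx X *m Hm.

Definition Hselfadjoint n (Hm A : 'M[H]_n) : Prop := Hadj Hm A = A.

Definition Hunitary n (Hm U : 'M[H]_n) : Prop := qadjmx U *m Hm *m U = Hm.

Definition Hpolar_decomposition n (Hm X U A : 'M[H]_n) : Prop :=
  [/\ Hunitary Hm U, Hselfadjoint Hm A & X = U *m A].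

Definition qker n (X : 'M[H]_n) : 'cV[H]_n -> Prop := fun x => X *m x = 0.

End QuatMatrices.

(* Main.v *)
Require Import Defs.
From HB Require Import structures.
From mathcomp Require Import all_boot all_order all_algebra.
From mathcomp Require Import reals.
From mathcomp Require Import ring lra.
From Stdlib Require Import Classical ClassicalEpsilon.
Import GRing.Theory.
Local Open Scope ring_scope.

Set Implicit Arguments. Unset Strict Implicit. Unset Printing Implicit Defensive.
Import Order.TTheory Num.Theory.

Lemma qconjD (R : realType) (p q : quat R) : qconj (p + q) = qconj p + qconj q.
Proof.
change (qconj (qadd p q) = qadd (qconj p) (qconj q)).
by case: p q => ????[????]; rewrite /qconj /qadd /=; congr Quat; ring.
Qed.
Lemma qconj0 (R : realType) : qconj (0 : quat R) = 0.
Proof. by rewrite /qconj /=; congr Quat; rewrite oppr0. Qed.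
Lemma qconjN (R : realType) (p : quat R) : qconj (- p) = - qconj p.
Proof. change (qconj (qopp p) = qopp (qconj p)). by case: p => ????. Qed.
Lemma qconjM (R : realType) (p q : quat R) : qconj (p * q) = qconj q * qconj p.
Proof.
change (qconj (qmul p q) = qmul (qconj q) (qconj p)).
by case: p q => ????[????]; rewrite /qconj /qmul /=; congr Quat; ring.
Qed.
Lemma qconjK (R : realType) (p : quat R) : qconj (qconj p) = p.
Proof. by case: p => ????; rewrite /qconj /= !opprK. Qed.
Lemma qconj1 (R : realType) : qconj (1 : quat R) = 1.
Proof. by rewrite /qconj /=; congr Quat; rewrite oppr0. Qed.

Definition qnorm2 (R : realType) (p : quat R) :=
  qre p ^+ 2 + qi p ^+ 2 + qj p ^+ 2 + qk p ^+ 2.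
Definition qinv (R : realType) (p : quat R) :=
  Quat (qre p / qnorm2 p) (- qi p / qnorm2 p) (- qj p / qnorm2 p) (- qk p / qnorm2 p).

Lemma qnorm2_neq0 (R : realType) (p : quat R) : p != 0 -> qnorm2 p != 0.
Proof.
case: p => a b c d /= Hp; rewrite /qnorm2 /=.
apply/eqP => H0; move/eqP: Hp; apply.
have ha : 0 <= a ^+ 2 by apply: sqr_ge0.
have hb : 0 <= b ^+ 2 by apply: sqr_ge0.
have hc : 0 <= c ^+ 2 by apply: sqr_ge0.
have hd : 0 <= d ^+ 2 by apply: sqr_ge0.
have Ea : a ^+ 2 = 0 by lra.
have Eb : b ^+ 2 = 0 by lra.
have Ec : c ^+ 2 = 0 by lra.
have Ed : d ^+ 2 = 0 by lra.
move/eqP: Ea; move/eqP: Eb; move/eqP: Ec; move/eqP: Ed.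
rewrite !sqrf_eq0 => /eqP-> /eqP-> /eqP-> /eqP->. by [].
Qed.

Lemma qmulV (R : realType) (p : quat R) : p != 0 -> p * qinv p = 1.
Proof.
move=> /qnorm2_neq0 Hn. change (qmul p (qinv p) = qone R).
move: Hn; case: p => a b c d; rewrite /qnorm2 /qinv /qmul /qone /= => Hn.
congr Quat; rewrite /qnorm2 /=; field; exact: Hn.
Qed.
Lemma qmulVl (R : realType) (p : quat R) : p != 0 -> qinv p * p = 1.
Proof.
move=> /qnorm2_neq0 Hn. change (qmul (qinv p) p = qone R).
move: Hn; case: p => a b c d; rewrite /qnorm2 /qinv /qmul /qone /= => Hn.
congr Quat; rewrite /qnorm2 /=; field; exact: Hn.
Qed.

Lemma qadjmxD (R : realType) m n (A B : 'M[quat R]_(m, n)) :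
  qadjmx (A + B) = qadjmx A + qadjmx B.
Proof. by apply/matrixP => i j; rewrite !mxE qconjD. Qed.
Lemma qadjmxN (R : realType) m n (A : 'M[quat R]_(m, n)) :
  qadjmx (- A) = - qadjmx A.
Proof. by apply/matrixP => i j; rewrite !mxE qconjN. Qed.
Lemma qadjmxB (R : realType) m n (A B : 'M[quat R]_(m, n)) :
  qadjmx (A - B) = qadjmx A - qadjmx B.
Proof. by rewrite qadjmxD qadjmxN. Qed.
Lemma qadjmx0 (R : realType) m n : qadjmx (0 : 'M[quat R]_(m, n)) = 0.
Proof. by apply/matrixP => i j; rewrite !mxE qconj0. Qed.
Lemma qadjmxK (R : realType) m n (A : 'M[quat R]_(m, n)) : qadjmx (qadjmx A) = A.
Proof. by apply/matrixP => i j; rewrite !mxE qconjK. Qed.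
Lemma qadjmx_scalar (R : realType) n (a : quat R) :
  qadjmx (a%:M : 'M_n) = (qconj a)%:M.
Proof.
apply/matrixP => i j; rewrite !mxE eq_sym.
by case: (i == j); rewrite /= ?qconj0.
Qed.
Lemma qadjmx1 (R : realType) n : qadjmx (1%:M : 'M[quat R]_n) = 1%:M.
Proof. by rewrite qadjmx_scalar qconj1. Qed.
Lemma qadjmxM (R : realType) m n p (A : 'M[quat R]_(m, n)) (B : 'M_(n, p)) :
  qadjmx (A *m B) = qadjmx B *m qadjmx A.
Proof.
apply/matrixP => i j; rewrite !mxE.
rewrite (big_morph (@qconj R) (@qconjD R) (qconj0 R)).
by apply: eq_bigr => k _; rewrite !mxE qconjM.
Qed.

Definition inv11 (R : realType) (M : 'M[quat R]_1) : 'M[quat R]_1 :=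
  (qinv (M 0 0))%:M.

Lemma mx11_neq0 (R : realType) (M : 'M[quat R]_1) : M != 0 -> M 0 0 != 0.
Proof.
move=> HM; apply/eqP => H0; move/eqP: HM; apply.
by by rewrite [M]mx11_scalar H0 raddf0.
Qed.

Lemma inv11_r (R : realType) (M : 'M[quat R]_1) : M != 0 -> M *m inv11 M = 1%:M.
Proof.
move=> /mx11_neq0 HM; rewrite [M in M *m _]mx11_scalar /inv11 -scalar_mxM.
by rewrite qmulV.
Qed.
Lemma inv11_l (R : realType) (M : 'M[quat R]_1) : M != 0 -> inv11 M *m M = 1%:M.
Proof.
move=> /mx11_neq0 HM; rewrite [M in _ *m M]mx11_scalar /inv11 -scalar_mxM.
by rewrite qmulVl.
Qed.

Lemma mul11_neq0 (R : realType) n (M : 'M[quat R]_1) (N : 'M[quat R]_(1, n)) :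
  M != 0 -> N != 0 -> M *m N != 0.
Proof.
move=> HM HN; apply/eqP => H0; move/eqP: HN; apply.
by rewrite -[N]mul1mx -(inv11_l HM) -mulmxA H0 mulmx0.
Qed.

Lemma mul11_neq0r (R : realType) n (M : 'M[quat R]_(n, 1)) (N : 'M[quat R]_1) :
  M != 0 -> N != 0 -> M *m N != 0.
Proof.
move=> HM HN; apply/eqP => H0; move/eqP: HM; apply.
by rewrite -[M]mulmx1 -(inv11_r HN) mulmxA H0 mul0mx.
Qed.

Lemma fredholm (R : realType) n m (Q : 'M[quat R]_(n, m)) (v : 'cV_n) :
  (forall c, Q *m c != v) -> exists r : 'rV_n, r *m Q = 0 /\ r *m v != 0.
Proof.
elim: m Q v => [|m IH] Q v Hv.
  have vn0 : v != 0 by have := Hv 0; rewrite mulmx0 eq_sym.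
  case: (boolP [exists i, v i 0 != 0]) => [/existsP [i Hi]|Hn].
    exists (delta_mx 0 i); split; first by rewrite thinmx0.
    rewrite -rowE; apply/eqP => /matrixP /(_ 0 0); rewrite !mxE => Hi0.
    by move/eqP: Hi; apply.
  move/eqP: vn0; case; apply/matrixP => i j; rewrite (ord1 j) mxE.
  by move: Hn; rewrite negb_exists => /forallP /(_ i); rewrite negbK => /eqP.
move: Q Hv; rewrite -add1n => Q Hv.
pose q := lsubmx (Q : 'M_(n, 1 + m)).
pose Q1 := rsubmx (Q : 'M_(n, 1 + m)).
have HQ : Q = row_mx q Q1 by rewrite hsubmxK.
have Hv1 : forall c, Q1 *m c != v.
  move=> c; apply/eqP => Hc; move/eqP: (Hv (col_mx 0 c : 'cV_(1 + m))); apply.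
  by rewrite HQ mul_row_col mulmx0 add0r.
have [r1 [Hr1Q Hr1v]] := IH Q1 v Hv1.
case: (eqVneq (r1 *m q) 0) => Hq.
  exists r1; split => //.
  by rewrite HQ mul_mx_row Hq Hr1Q row_mx0.
pose v' := v - q *m inv11 (r1 *m q) *m (r1 *m v).
have Hv2 : forall c, Q1 *m c != v'.
  move=> c; apply/eqP => Hc; move/eqP:
    (Hv (col_mx (inv11 (r1 *m q) *m (r1 *m v)) c : 'cV_(1 + m))); apply.
  rewrite HQ mul_row_col Hc /v' mulmxA.
  by rewrite addrC subrK.
have [r2 [Hr2Q Hr2v]] := IH Q1 v' Hv2.
exists (r2 - (r2 *m q) *m inv11 (r1 *m q) *m r1); split.
  rewrite HQ mul_mx_row mulmxBl mulmxBl Hr2Q -!mulmxA Hr1Q !mulmx0 subrr inv11_l // mulmx1 subrr.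
  idtac.
  by rewrite row_mx0.
rewrite mulmxBl; move: Hr2v; rewrite /v' mulmxBr !mulmxA.
by [].
Qed.

Lemma transvect (R : realType) n (Hm : 'M[quat R]_n) (d x : 'cV_n) :
  qadjmx Hm = Hm ->
  qadjmx d *m Hm *m x != 0 ->
  qadjmx d *m Hm *m d = qadjmx d *m Hm *m x + qadjmx (qadjmx d *m Hm *m x) ->
  exists s : 'M[quat R]_n, [/\ Hunitary Hm s, s *m x = x - d &
     forall k (w : 'M_(n, k)), qadjmx d *m Hm *m w = 0 -> s *m w = w].
Proof.
move=> hH; set K := qadjmx d *m Hm; set T := K *m x => HT Hdelta.
set S := inv11 T.
have TS : T *m S = 1%:M by apply: inv11_r.
have ST : S *m T = 1%:M by apply: inv11_l.
have S'T' : qadjmx S *m qadjmx T = 1%:M by rewrite -qadjmxM TS qadjmx1.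
have key : qadjmx S *m (K *m d) *m S = qadjmx S + S.
  by rewrite Hdelta mulmxDr mulmxDl -mulmxA TS mulmx1 S'T' mul1mx addrC.
have adjK : qadjmx K = Hm *m d by rewrite qadjmxM hH qadjmxK.
exists (1%:M - d *m S *m K); split.
  rewrite /Hunitary qadjmxB qadjmx1 !qadjmxM qadjmxK hH.
  rewrite mulmxBl mul1mx mulmxBr mulmx1 mulmxBl.
  rewrite -!mulmxA -/K.
  have E : Hm *m (d *m (S *m K)) = Hm *m d *m S *m K by rewrite !mulmxA.
  have E2 : Hm *m (d *m (qadjmx S *m K)) = Hm *m d *m qadjmx S *m K by rewrite !mulmxA.
  have E3 : Hm *m (d *m (qadjmx S *m (qadjmx d *m (Hm *m (d *m (S *m K)))))) =
            Hm *m d *m (qadjmx S *m (K *m d) *m S) *m K by rewrite /K !mulmxA.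
  rewrite E3 E E2 key mulmxDr mulmxDl.
  by rewrite opprB addrK subrK.
- by rewrite mulmxBl mul1mx -!mulmxA [qadjmx d *m (Hm *m x)]mulmxA -/K -/T ST mulmx1.
- move=> k w Hw; by rewrite mulmxBl mul1mx -[d *m S *m K *m w]mulmxA Hw !mulmx0 subr0.
Qed.

Lemma inv11_neq0 (R : realType) (M : 'M[quat R]_1) : M != 0 -> inv11 M != 0.
Proof.
move=> HM; apply/eqP => H0; have := inv11_r HM; rewrite H0 mulmx0 => /matrixP /(_ 0 0).
rewrite !mxE /= => /eqP; rewrite eq_sym; exact/negP/oner_neq0.
Qed.

Lemma qadjmx_neq0 (R : realType) m n (M : 'M[quat R]_(m, n)) : M != 0 -> qadjmx M != 0.
Proof.
move=> HM; apply/eqP => H0; move/eqP: HM; apply.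
by rewrite -[M]qadjmxK H0 qadjmx0.
Qed.

Lemma adj_inv11 (R : realType) (M : 'M[quat R]_1) :
  M != 0 -> qadjmx (inv11 M) *m qadjmx M = 1%:M.
Proof. by move=> HM; rewrite -qadjmxM inv11_r // qadjmx1. Qed.

Lemma two_neq0 (R : realType) : (1 + 1 : quat R) != 0.
Proof.
apply/eqP => /(congr1 (@qre R)) /=.
change (qre (qadd (qone R) (qone R)) = 0 -> False) => /=.
by move=> H; lra.
Qed.

Lemma choose_a (R : realType) (b g : 'M[quat R]_1) :
  b != 0 -> qadjmx g = g ->
  exists a : 'M[quat R]_1, a != 0 /\
    qadjmx b *m a + qadjmx a *m b + qadjmx a *m g *m a = 0.
Proof.
move=> Hb Hg.
have Hb' : qadjmx b != 0 by apply: qadjmx_neq0.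
case: (eqVneq g 0) => Hg0.
  pose e : 'M[quat R]_1 := (Quat 0 1 0 0)%:M.
  have He : qadjmx e = - e.
    apply/matrixP => i j; rewrite (ord1 i) (ord1 j) !mxE /= !mulr1n.
    change (Quat (0:R) (-1) (-0) (-0) = qopp (Quat 0 1 0 0)).
    by rewrite /qopp /= oppr0.
  have He0 : e != 0.
    apply/eqP => /matrixP /(_ 0 0); rewrite !mxE /= => /(congr1 (@qi R)) /=.
    by move/eqP; rewrite oner_eq0.
  exists (inv11 (qadjmx b) *m e); split.
    by apply: mul11_neq0 => //; apply: inv11_neq0.
  rewrite Hg0 mulmx0 mul0mx addr0 mulmxA inv11_r // mul1mx qadjmxM He.
  rewrite !mulNmx -mulmxA.
  have -> : qadjmx (inv11 (qadjmx b)) *m b = 1%:M.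
    by rewrite -{2}[b]qadjmxK adj_inv11.
  by rewrite mulmx1 subrr.
set G := inv11 g *m b.
have HG : qadjmx (inv11 g) = inv11 g.
  have E : qadjmx (inv11 g) *m g = 1%:M.
    by rewrite -{2}Hg adj_inv11.
  by rewrite -[qadjmx (inv11 g)]mulmx1 -(inv11_r Hg0) mulmxA E mul1mx.
exists (- (G + G)); split.
  rewrite oppr_eq0 -[G]mul1mx -mulmxDl.
  apply: mul11_neq0; last by apply: mul11_neq0 => //; apply: inv11_neq0.
  have -> : (1%:M + 1%:M : 'M[quat R]_1) = (1 + 1)%:M by rewrite raddfD.
  apply/eqP => /matrixP /(_ 0 0); rewrite !mxE /= mulr1n; apply/eqP.
  exact: two_neq0.
have E1 : qadjmx b *m G = qadjmx b *m inv11 g *m b by rewrite mulmxA.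
have E2 : qadjmx G *m b = qadjmx b *m inv11 g *m b by rewrite qadjmxM HG.
have E3 : qadjmx G *m g *m G = qadjmx b *m inv11 g *m b.
  rewrite qadjmxM HG -!mulmxA (mulmxA g) inv11_r // mul1mx.
  by rewrite mulmxA.
rewrite qadjmxN qadjmxD mulmxN mulNmx mulmxDr mulmxDl E1 E2.
rewrite !mulNmx mulmxN opprK !mulmxDl !mulmxDr !E3.
set C := qadjmx b *m inv11 g *m b.
by rewrite -opprD addNr.
Qed.

Lemma step_nz (R : realType) n m (Hm : 'M[quat R]_n) (W : 'M_(n, m)) (x y : 'cV_n) :
  qadjmx Hm = Hm ->
  qadjmx W *m Hm *m x = qadjmx W *m Hm *m y ->
  qadjmx x *m Hm *m x = qadjmx y *m Hm *m y ->
  qadjmx (x - y) *m Hm *m x != 0 ->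
  exists V : 'M[quat R]_n, [/\ Hunitary Hm V, V *m W = W & V *m x = y].
Proof.
move=> hH HW Hxy HT.
have Hd : qadjmx (x - y) *m Hm *m (x - y) =
   qadjmx (x - y) *m Hm *m x + qadjmx (qadjmx (x - y) *m Hm *m x).
  rewrite !qadjmxM hH qadjmxK !mulmxA qadjmxB !mulmxBl !mulmxBr.
  by rewrite -Hxy opprB addrC.
have [s [Us Sx Sw]] := transvect hH HT Hd.
exists s; split => //.
  apply: Sw.
  have E : qadjmx (qadjmx W *m Hm *m (x - y)) = qadjmx (x - y) *m Hm *m W.
    by rewrite !qadjmxM qadjmxK hH mulmxA.
  by rewrite -E mulmxBr HW subrr qadjmx0.
by rewrite Sx opprB addrC subrK.
Qed.

Lemma unitaryM (R : realType) n (Hm U V : 'M[quat R]_n) :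
  Hunitary Hm U -> Hunitary Hm V -> Hunitary Hm (U *m V).
Proof.
rewrite /Hunitary => HU HV.
by rewrite qadjmxM !mulmxA -[qadjmx V *m qadjmx U *m Hm]mulmxA -[qadjmx V *m _ *m U]mulmxA HU HV.
Qed.

Lemma perp_exists (R : realType) n m (Hm Hinv : 'M[quat R]_n) (W : 'M_(n, m))
  (x : 'cV_n) :
  qadjmx Hm = Hm -> Hm *m Hinv = 1%:M ->
  (forall c, W *m c != x) ->
  exists u : 'cV_n, qadjmx u *m Hm *m W = 0 /\ qadjmx u *m Hm *m x != 0.
Proof.
move=> hH HR Hx.
have [r [rW rx]] := fredholm Hx.
have E : qadjmx (Hinv *m qadjmx r) *m Hm = r.
  rewrite qadjmxM qadjmxK -mulmxA -{1}hH -qadjmxM HR qadjmx1.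
  by rewrite mulmx1.
by exists (Hinv *m qadjmx r); rewrite E.
Qed.

Lemma adj_form (R : realType) n m p (Hm : 'M[quat R]_n) (A : 'M_(n, m)) (B : 'M_(n, p)) :
  qadjmx Hm = Hm -> qadjmx (qadjmx A *m Hm *m B) = qadjmx B *m Hm *m A.
Proof. by move=> hH; rewrite !qadjmxM qadjmxK hH mulmxA. Qed.

Lemma witt_step (R : realType) n m (Hm Hinv : 'M[quat R]_n) (W : 'M_(n, m))
  (x y : 'cV_n) :
  qadjmx Hm = Hm -> Hm *m Hinv = 1%:M ->
  qadjmx W *m Hm *m x = qadjmx W *m Hm *m y ->
  qadjmx x *m Hm *m x = qadjmx y *m Hm *m y ->
  (forall c, W *m c != x) -> (forall c, W *m c != y) ->
  exists V : 'M[quat R]_n, [/\ Hunitary Hm V, V *m W = W & V *m x = y].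
Proof.
move=> hH HR HW Hxy Hx Hy.
case: (eqVneq (qadjmx (x - y) *m Hm *m x) 0) => HT; last first.
  exact: step_nz.
have [u0 [u0W u0x u0y]] : exists u0 : 'cV_n, [/\ qadjmx u0 *m Hm *m W = 0,
    qadjmx u0 *m Hm *m x != 0 & qadjmx u0 *m Hm *m y != 0].
  have [u1 [u1W u1x]] := perp_exists hH HR Hx.
  have [u2 [u2W u2y]] := perp_exists hH HR Hy.
  case: (eqVneq (qadjmx u1 *m Hm *m y) 0) => H1; last by exists u1.
  case: (eqVneq (qadjmx u2 *m Hm *m x) 0) => H2; last by exists u2.
  exists (u1 + u2); rewrite qadjmxD !mulmxDl u1W u2W H1 H2 addr0 add0r.
  by rewrite addr0; split.
have Wu0 : qadjmx W *m Hm *m u0 = 0 by rewrite -adj_form // u0W qadjmx0.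
set b := qadjmx u0 *m Hm *m x.
set g := qadjmx u0 *m Hm *m u0.
have [a [a0 Ha]] := choose_a u0x (adj_form u0 u0 hH).
set u := u0 *m a.
set z := x + u.
have Wz : qadjmx W *m Hm *m z = qadjmx W *m Hm *m x.
  by rewrite /z /u mulmxDr mulmxA Wu0 mul0mx addr0.
have Hz : qadjmx z *m Hm *m z = qadjmx x *m Hm *m x.
  have E1 : qadjmx x *m Hm *m u = qadjmx b *m a.
    by rewrite /u /b adj_form // mulmxA.
  have E2 : qadjmx u *m Hm *m x = qadjmx a *m b.
    by rewrite /u /b qadjmxM -!mulmxA.
  have E3 : qadjmx u *m Hm *m u = qadjmx a *m g *m a.
    by rewrite /u /g qadjmxM !mulmxA.
  rewrite /z qadjmxD !mulmxDl !mulmxDr E1 E2 E3.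
  by rewrite -addrA [qadjmx b *m a + _]addrA Ha addr0.
have [V1 [U1 V1W V1x]] : exists V : 'M[quat R]_n, [/\ Hunitary Hm V, V *m W = W & V *m x = z].
  apply: step_nz => //.
  rewrite /z opprD addrA subrr add0r qadjmxN !mulNmx oppr_eq0 /u qadjmxM.
  rewrite -!mulmxA !(mulmxA (qadjmx u0)).
  by apply: mul11_neq0 => //; apply: qadjmx_neq0.
have [V2 [U2 V2W V2z]] : exists V : 'M[quat R]_n, [/\ Hunitary Hm V, V *m W = W & V *m z = y].
  apply: step_nz => //; try by rewrite ?Wz ?HW ?Hz ?Hxy.
  have Exy : qadjmx x *m Hm *m x = qadjmx y *m Hm *m x.
    by move/eqP: HT; rewrite qadjmxB !mulmxBl subr_eq0 => /eqP.
  have Eyz : qadjmx y *m Hm *m z = qadjmx y *m Hm *m x + qadjmx y *m Hm *m u0 *m a.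
    by rewrite /z /u mulmxDr mulmxA.
  rewrite qadjmxB !mulmxBl Hz Eyz Exy opprD addrA subrr add0r oppr_eq0.
  apply: mul11_neq0 => //.
  by rewrite -adj_form //; apply: qadjmx_neq0.
exists (V2 *m V1); split.
- exact: unitaryM.
- by rewrite -mulmxA V1W V2W.
- by rewrite -mulmxA V1x V2z.
Qed.

Lemma gram_sub (R : realType) n k l j (Hm : 'M[quat R]_n) (P : 'M_(n, k))
  (E : 'M_(k, l)) (F : 'M_(k, j)) :
  qadjmx (P *m E) *m Hm *m (P *m F) = qadjmx E *m (qadjmx P *m Hm *m P) *m F.
Proof. by rewrite qadjmxM !mulmxA. Qed.

Lemma unitary_inj (R : realType) n (Hm Hinv U : 'M[quat R]_n) :
  Hinv *m Hm = 1%:M -> Hunitary Hm U ->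
  forall k (a b : 'M_(n, k)), U *m a = U *m b -> a = b.
Proof.
move=> HL HU k a b Hab.
have L : Hinv *m qadjmx U *m Hm *m U = 1%:M.
  by rewrite -!mulmxA (mulmxA (qadjmx U)) HU HL.
by rewrite -[a]mul1mx -[b]mul1mx -L -!mulmxA Hab.
Qed.

Lemma witt (R : realType) n (Hm Hinv : 'M[quat R]_n) :
  qadjmx Hm = Hm -> Hinv *m Hm = 1%:M -> Hm *m Hinv = 1%:M ->
  forall k (P Q : 'M_(n, k)), qadjmx P *m Hm *m P = qadjmx Q *m Hm *m Q ->
  (forall c : 'cV_k, P *m c = 0 <-> Q *m c = 0) ->
  exists U : 'M[quat R]_n, Hunitary Hm U /\ U *m P = Q.
Proof.
move=> hH HL HR k; elim: k => [|k IH] P Q HG HK.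
  exists 1%:M; split; first by rewrite /Hunitary qadjmx1 mul1mx mulmx1.
  by rewrite [P]thinmx0 [Q]thinmx0 mulmx0.
move: P Q HG HK; rewrite -add1n => P Q HG HK.
pose p := lsubmx P; pose P1 := rsubmx P.
pose q := lsubmx Q; pose Q1 := rsubmx Q.
have HP : P = row_mx p P1 by rewrite hsubmxK.
have HQ : Q = row_mx q Q1 by rewrite hsubmxK.
pose E1 : 'M[quat R]_(1 + k, 1) := col_mx 1%:M 0.
pose E2 : 'M[quat R]_(1 + k, k) := col_mx 0 1%:M.
have PE1 : P *m E1 = p by rewrite HP mul_row_col mulmx1 mulmx0 addr0.
have PE2 : P *m E2 = P1 by rewrite HP mul_row_col mulmx1 mulmx0 add0r.
have QE1 : Q *m E1 = q by rewrite HQ mul_row_col mulmx1 mulmx0 addr0.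
have QE2 : Q *m E2 = Q1 by rewrite HQ mul_row_col mulmx1 mulmx0 add0r.
have G11 : qadjmx p *m Hm *m p = qadjmx q *m Hm *m q.
  by rewrite -PE1 -QE1 !gram_sub HG.
have G21 : qadjmx P1 *m Hm *m p = qadjmx Q1 *m Hm *m q.
  by rewrite -PE1 -QE1 -PE2 -QE2 !gram_sub HG.
have G22 : qadjmx P1 *m Hm *m P1 = qadjmx Q1 *m Hm *m Q1.
  by rewrite -PE2 -QE2 !gram_sub HG.
have HK1 : forall c : 'cV_k, P1 *m c = 0 <-> Q1 *m c = 0.
  by move=> c; have := HK (E2 *m c); rewrite !mulmxA PE2 QE2.
have [U1 [HU1 U1P1]] := IH P1 Q1 G22 HK1.
have inj := unitary_inj HL HU1.
pose p' := U1 *m p.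
have Hcol : forall c : 'cV_k, P *m col_mx (- 1%:M) c = - p + P1 *m c.
  by move=> c; rewrite HP mul_row_col mulmxN mulmx1.
have Hcol' : forall c : 'cV_k, Q *m col_mx (- 1%:M) c = - q + Q1 *m c.
  by move=> c; rewrite HQ mul_row_col mulmxN mulmx1.
have [V [HV VQ1 Vp]] : exists V : 'M[quat R]_n,
    [/\ Hunitary Hm V, V *m Q1 = Q1 & V *m p' = q].
  case: (classic (exists c, Q1 *m c = p')) => [[c Hc]|Hn1].
    exists 1%:M; split; rewrite ?mul1mx //; first by rewrite /Hunitary qadjmx1 mul1mx mulmx1.
    have Pc : P1 *m c = p by apply: inj; rewrite mulmxA U1P1 Hc.
    have : Q *m col_mx (- 1%:M) c = 0 by apply/HK; rewrite Hcol Pc addNr.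
    by rewrite Hcol' Hc => /eqP; rewrite addrC subr_eq0 => /eqP.
  case: (classic (exists c, Q1 *m c = q)) => [[c Hc]|Hn2].
    exists 1%:M; split; rewrite ?mul1mx //; first by rewrite /Hunitary qadjmx1 mul1mx mulmx1.
    have : P *m col_mx (- 1%:M) c = 0 by apply/HK; rewrite Hcol' Hc addNr.
    rewrite Hcol => /eqP; rewrite addrC subr_eq0 => /eqP Pc.
    by rewrite /p' -Pc mulmxA U1P1.
  apply: (witt_step hH HR).
  - rewrite -{1}U1P1 qadjmxM /p' -!mulmxA (mulmxA (qadjmx U1)).
    rewrite (mulmxA (qadjmx U1 *m Hm)) HU1.
    by rewrite !mulmxA G21.
  - rewrite /p' qadjmxM -!mulmxA (mulmxA (qadjmx U1)).
    rewrite (mulmxA (qadjmx U1 *m Hm)) HU1.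
    by rewrite !mulmxA G11.
  - by move=> c; apply/eqP => Hc; apply: Hn1; exists c.
  - by move=> c; apply/eqP => Hc; apply: Hn2; exists c.
exists (V *m U1); split; first exact: unitaryM.
by rewrite HP HQ mul_mx_row -!mulmxA U1P1 VQ1 -/p' Vp.
Qed.
Unset Implicit Arguments.
Theorem theorem6p1 (R : realType) (n : nat) (Hm X : 'M[quat R]_n) :
  qhermitian Hm -> qinvertible Hm ->
  (exists U A : 'M[quat R]_n, Hpolar_decomposition Hm X U A) <->
  (exists A : 'M[quat R]_n,
     [/\ Hselfadjoint Hm A, A *m A = Hadj Hm X *m X &
         forall x : 'cV[quat R]_n, qker X x <-> qker A x]).
Proof.
move=> hH Hinv.
have [HR HL] : Hm *m qinvmx Hm = 1%:M /\ qinvmx Hm *m Hm = 1%:M.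
  exact: (epsilon_spec (inhabits 0) _ Hinv).
split.
  move=> [U [A [HU HA HX]]]; exists A; split => //.
    rewrite /Hadj HX qadjmxM -!mulmxA (mulmxA (qadjmx U)).
    rewrite (mulmxA (qadjmx U *m Hm)) HU.
    by rewrite !mulmxA -/(Hadj Hm A) HA.
  move=> x; rewrite /qker HX -mulmxA; split => H0; last by rewrite H0 mulmx0.
  by apply: (unitary_inj HL HU); rewrite H0 mulmx0.
move=> [A [HA HAX HK]].
have AH : qadjmx A *m Hm = Hm *m A.
  by rewrite -{2}HA /Hadj !mulmxA HR mul1mx.
have HG : qadjmx A *m Hm *m A = qadjmx X *m Hm *m X.
  by rewrite AH -mulmxA HAX /Hadj !mulmxA HR mul1mx.
have [U [HU UA]] := witt hH HL HR HG (fun c => iff_sym (HK c)).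
by exists U, A; split.
Qed.
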